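(* Let $G$ be a finitely generated group such that $F'$ consists of weak* identities in $G$ modulo $F''$. Then for every $n\ge1$, $F'$ consists of weak* identities in $G$ modulo $F^{(n)}$, the $n$-th term of the derived series of $F$.
   Context: Let $F$ be the free group on countably many generators $g_1,g_2,\dots$; its derived series is $F^{(1)}=F'=[F,F]$, $F^{(k+1)}=[F^{(k)},F^{(k)}]$, and $F''=F^{(2)}$. For $N\ge 1$, $F^{\times N}$ is the direct product of $N$ copies of $F$, $i_k:F\to F^{\times N}$ the $k$-th inclusion. A subset $S\subset F$ is a set of weak identities in a group $G$ if there exists $N\ge1$ such that for any $s_1,\dots,s_N\in S$ and any homomorphism $\rho:F^{\times N}\to G$ some $k$ has $\rho(i_k(s_k))=1$. A $T$-subgroup of $F$ is a subgroup preserved by all endomorphisms of $F$. For a $T$-subgroup $\mathcal{H}$, $\mathcal{H}(G)=\{\pi(h):h\in\mathcal{H},\ \pi:F\to G\text{ a homomorphism}\}$. $S$ consists of weak identities modulo $\mathcal{H}$ in $G$ if $S$ is a set of weak identities in $G/\mathcal{H}(G)$. A $T$-subgroup $\mathcal{S}$ consists of weak* identities in $G$ modulo a $T$-subgroup $\mathcal{H}$ if there exist $m\ge0$ and $T$-subgroups $\mathcal{S}_0=\mathcal{S},\dots,\mathcal{S}_m=\mathcal{H}$ such that $\mathcal{S}_{j-1}$ consists of weak identities modulo $\mathcal{S}_j$ in $G$ for all $j=1,\dots,m$. *)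

(* Defs.v *)
From Stdlib Require Import Relations.
From mathcomp Require Import all_boot.
Set Implicit Arguments. Unset Strict Implicit. Unset Printing Implicit Defensive.

Record group := Group {
  gcar :> Type;
  gmul : gcar -> gcar -> gcar;
  ginv : gcar -> gcar;
  gone : gcar;
  gmulA : forall x y z, gmul x (gmul y z) = gmul (gmul x y) z;
  gmul1g : forall x, gmul gone x = x;
  gmulVg : forall x, gmul (ginv x) x = gone
}.

Definition gcomm (G : group) (x y : G) : G :=
  gmul (ginv x) (gmul (ginv y) (gmul x y)).

(** * The free group F on generators g_0, g_1, ... as words modulo free reduction *)
(* letter (i, false) = g_i, letter (i, true) = g_i^-1 *)
Definition letter := (nat * bool)%type.
Definition word := seq letter.

Definition linv (l : letter) : letter := (l.1, ~~ l.2).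
Definition winv (w : word) : word := rev (map linv w).
Definition wcomm (a b : word) : word := winv a ++ winv b ++ a ++ b.

(* one-step free reduction and its equivalence closure: equality in F *)
Definition fred (u v : word) : Prop :=
  exists (x y : word) (l : letter), u = x ++ [:: l; linv l] ++ y /\ v = x ++ y.
Definition freeq : word -> word -> Prop := clos_refl_sym_trans word fred.

(* endomorphisms of F: substitutions of generators by words *)
Definition wsubst (s : nat -> word) (w : word) : word :=
  flatten (map (fun l : letter => if l.2 then winv (s l.1) else s l.1) w).

(* homomorphisms F -> G: determined by the images a : nat -> G of generators *)
Definition weval (G : group) (a : nat -> G) (w : word) : G :=
  foldr (fun (l : letter) acc =>
           gmul (if l.2 then ginv (a l.1) else a l.1) acc) (gone G) w.

(** Subsets of F are predicates on words; a subgroup must respect freeq. *)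
Definition is_subgroupF (H : word -> Prop) : Prop :=
  [/\ forall u v, freeq u v -> H u -> H v,
      H [::],
      forall u v, H u -> H v -> H (u ++ v)
    & forall u, H u -> H (winv u)].

Definition is_Tsubgroup (H : word -> Prop) : Prop :=
  is_subgroupF H /\ forall s w, H w -> H (wsubst s w).

Inductive comm_sub (P : word -> Prop) : word -> Prop :=
| cs_comm a b : P a -> P b -> comm_sub P (wcomm a b)
| cs_nil : comm_sub P [::]
| cs_cat u v : comm_sub P u -> comm_sub P v -> comm_sub P (u ++ v)
| cs_inv u : comm_sub P u -> comm_sub P (winv u)
| cs_eq u v : freeq u v -> comm_sub P u -> comm_sub P v.

Fixpoint derived (k : nat) : word -> Prop :=
  match k with
  | 0 => fun _ => True
  | k'.+1 => comm_sub (derived k')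
  end.

(* H(G) = { pi(h) : h in H, pi : F -> G homomorphism } *)
Definition values (H : word -> Prop) (G : group) : G -> Prop :=
  fun x => exists (h : word) (a : nat -> G), H h /\ x = weval a h.

(** S is a set of weak identities in G / K (K a normal subgroup of G, here
    always K = H(G)).  A homomorphism rho : F^{xN} -> G/K is given by the
    images (lifted to G) a k i of the generators i_k(g_i), subject to the
    requirement that images coming from different factors commute in G/K,
    i.e. their commutators lie in K; rho(i_k(s)) = 1 in G/K iff
    weval (a k) s lies in K. *)
Definition weak_ids_mod (G : group) (K : G -> Prop) (S : word -> Prop) : Prop :=
  exists N : nat, 0 < N /\
    forall s : 'I_N -> word, (forall k, S (s k)) ->
    forall a : 'I_N -> nat -> G,
      (forall k l : 'I_N, k != l -> forall i j, K (gcomm (a k i) (a l j))) ->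
      exists k : 'I_N, K (weval (a k) (s k)).

Definition weak_ids_modT (G : group) (H S : word -> Prop) : Prop :=
  @weak_ids_mod G (@values H G) S.

Definition weakstar_ids_mod (G : group) (S H : word -> Prop) : Prop :=
  exists (m : nat) (Ss : nat -> word -> Prop),
    [/\ Ss 0 = S, Ss m = H,
        forall j, j <= m -> is_Tsubgroup (Ss j)
      & forall j, 0 < j <= m -> weak_ids_modT G (Ss j) (Ss j.-1)].

Definition fin_gen (G : group) : Prop :=
  exists gens : seq G, forall x : G,
    exists w : word, x = weval (fun i => nth (gone G) gens i) w.

(* Main.v *)
Require Import Defs.
From mathcomp Require Import all_boot.
From Stdlib Require Import Relations Classical ClassicalEpsilon.
Set Implicit Arguments. Unset Strict Implicit. Unset Printing Implicit Defensive.

Section GroupFacts.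
Variable G : group.
Implicit Types x y z : G.

Lemma gmulgV x : gmul x (ginv x) = gone G.
Proof.
rewrite -[gmul x (ginv x)]gmul1g -[in gmul (gone G) _](gmulVg (ginv x)).
rewrite -gmulA [gmul (ginv x) (gmul x (ginv x))]gmulA gmulVg gmul1g.
by rewrite gmulVg.
Qed.

Lemma gmulg1 x : gmul x (gone G) = x.
Proof. by rewrite -(gmulVg x) gmulA gmulgV gmul1g. Qed.

Lemma ginv_uniq x y : gmul x y = gone G -> y = ginv x.
Proof.
move=> h; by rewrite -[y]gmul1g -(gmulVg x) -gmulA h gmulg1.
Qed.

Lemma ginvM x y : ginv (gmul x y) = gmul (ginv y) (ginv x).
Proof.
symmetry; apply: ginv_uniq.
by rewrite -gmulA [gmul y (gmul _ _)]gmulA gmulgV gmul1g gmulgV.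
Qed.

Lemma ginvK x : ginv (ginv x) = x.
Proof. symmetry; apply: ginv_uniq; exact: gmulVg. Qed.

Lemma ginv1 : ginv (gone G) = gone G.
Proof. symmetry; apply: ginv_uniq; exact: gmul1g. Qed.
End GroupFacts.

Definition lv (G : group) (a : nat -> G) (l : letter) : G :=
  if l.2 then ginv (a l.1) else a l.1.

Lemma weval_cons (G : group) (a : nat -> G) l w : weval a (l :: w) = gmul (lv a l) (weval a w).
Proof. by []. Qed.

Lemma weval_cat (G : group) (a : nat -> G) u v : weval a (u ++ v) = gmul (weval a u) (weval a v).
Proof.
elim: u => [|l u IH] /=; first by rewrite gmul1g.
by rewrite IH gmulA.
Qed.

Lemma lv_linv (G : group) (a : nat -> G) l : lv a (linv l) = ginv (lv a l).
Proof. by case: l => i [] //=; rewrite /lv /= ginvK. Qed.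

Lemma weval_winv (G : group) (a : nat -> G) u : weval a (winv u) = ginv (weval a u).
Proof.
elim: u => [|l u IH]; first by rewrite /= ginv1.
have e1 : forall l', weval a [:: l'] = lv a l' by move=> l'; rewrite /= gmulg1.
rewrite /winv map_cons rev_cons -cats1 weval_cat -/(winv u) IH e1 weval_cons.
by rewrite lv_linv ginvM.
Qed.

Lemma weval_comm (G : group) (a : nat -> G) u v :
  weval a (wcomm u v) = gcomm (weval a u) (weval a v).
Proof. by rewrite /wcomm !weval_cat !weval_winv. Qed.

Lemma weval_fred (G : group) (a : nat -> G) u v : fred u v -> weval a u = weval a v.
Proof.
case=> x [y [l [-> ->]]].
rewrite !weval_cat !weval_cons lv_linv.
by rewrite [gmul (lv a l) _]gmulA gmulgV gmul1g /= gmul1g.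
Qed.

Lemma weval_freeq (G : group) (a : nat -> G) u v : freeq u v -> weval a u = weval a v.
Proof.
elim=> {u v} [u v /weval_fred //| u //| u v _ -> //| u v w _ -> _ -> //].
Qed.

Lemma weval_ext (G : group) (a b : nat -> G) w : (forall i, a i = b i) -> weval a w = weval b w.
Proof. move=> e; elim: w => [|l w IH] //=; by rewrite IH e. Qed.

Lemma weval_subst (G : group) (c : nat -> G) s w :
  weval c (wsubst s w) = weval (fun i => weval c (s i)) w.
Proof.
elim: w => [|l w IH] //=.
rewrite weval_cat IH; case: (l.2) => //; by rewrite weval_winv.
Qed.

Lemma linvK l : linv (linv l) = l.
Proof. by case: l => i b; rewrite /linv /= negbK. Qed.

Lemma winvK w : winv (winv w) = w.
Proof.
rewrite /winv map_rev revK -map_comp.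
by elim: w => [|l w IH] //=; rewrite IH linvK.
Qed.

Lemma winv_cat u v : winv (u ++ v) = winv v ++ winv u.
Proof. by rewrite /winv map_cat rev_cat. Qed.

Lemma wsubst_cat s u v : wsubst s (u ++ v) = wsubst s u ++ wsubst s v.
Proof. by rewrite /wsubst map_cat flatten_cat. Qed.

Definition piece (s : nat -> word) (l : letter) : word :=
  if l.2 then winv (s l.1) else s l.1.

Lemma wsubst_cons s l w : wsubst s (l :: w) = piece s l ++ wsubst s w.
Proof. by []. Qed.

Lemma piece_linv s l : piece s (linv l) = winv (piece s l).
Proof. case: l => i [] //=; by rewrite /piece /= winvK. Qed.

Lemma wsubst_winv s w : wsubst s (winv w) = winv (wsubst s w).
Proof.
elim: w => [|l w IH] //=.
rewrite /winv /= rev_cons -cats1 -/(winv w) wsubst_cat IH.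
change (winv (wsubst s w) ++ wsubst s [:: linv l] = winv (wsubst s (l :: w))).
have e1 : forall l', wsubst s [:: l'] = piece s l' by move=> l'; rewrite /wsubst /= cats0.
by rewrite e1 wsubst_cons winv_cat piece_linv.
Qed.

Lemma wsubst_comm s u v : wsubst s (wcomm u v) = wcomm (wsubst s u) (wsubst s v).
Proof. by rewrite /wcomm !wsubst_cat !wsubst_winv. Qed.

Lemma freeq_cancel p x y : freeq (x ++ p ++ winv p ++ y) (x ++ y).
Proof.
elim: p x y => [|l p IH] x y //=; first exact: rst_refl.
rewrite /winv /= rev_cons -cats1 -/(winv p).
apply: rst_trans (_ : freeq ((x ++ [:: l]) ++ [:: linv l] ++ y) _).
  have := IH (x ++ [:: l]) (linv l :: y).
  move=> h; rewrite -?catA /= -?catA in h *. exact: h.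
apply: rst_step; exists x, y, l; split=> //; by rewrite -catA.
Qed.

Lemma freeq_subst s u v : freeq u v -> freeq (wsubst s u) (wsubst s v).
Proof.
elim=> {u v} [u v [x [y [l [-> ->]]]]| u | u v _ IH | u v w _ IH1 _ IH2].
- rewrite !wsubst_cat !wsubst_cons piece_linv.
  have := freeq_cancel (piece s l) (wsubst s x) (wsubst s y).
  by move=> h; rewrite /wsubst /= cats0 -!catA -/(wsubst s x) -/(wsubst s y).
- exact: rst_refl.
- exact: rst_sym.
- exact: rst_trans IH2.
Qed.

Lemma comm_sub_T H : is_Tsubgroup H -> is_Tsubgroup (comm_sub H).
Proof.
case=> [[Heq H0 Hc Hi] Hs]; split.
  split; [exact: cs_eq | exact: cs_nil | exact: cs_cat | exact: cs_inv].
move=> s w; elim=> {w} [a b Ha Hb| |u v _ IHu _ IHv|u _ IH|u v e _ IH].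
- rewrite wsubst_comm; apply: cs_comm; exact: Hs.
- exact: cs_nil.
- rewrite wsubst_cat; exact: cs_cat.
- rewrite wsubst_winv; exact: cs_inv.
- apply: cs_eq IH; exact: freeq_subst.
Qed.

Lemma comm_sub_le H : is_Tsubgroup H -> forall w, comm_sub H w -> H w.
Proof.
case=> [[Heq H0 Hc Hi] Hs] w; elim=> //.
- move=> a b Ha Hb; rewrite /wcomm; apply: (Hc); first exact: Hi.
  apply: (Hc); first exact: Hi. exact: Hc.
- move=> u v _ Hu _ Hv; exact: Hc.
- move=> u _ Hu; exact: Hi.
- move=> u v e _ Hu; exact: Heq Hu.
Qed.

Definition ren2 (k : nat) : nat -> word := fun i => [:: (i.*2 + k, false)].
Definition comb (G : group) (a b : nat -> G) : nat -> G :=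
  fun i => if odd i then b i./2 else a i./2.

Lemma weval_ren0 (G : group) (a b : nat -> G) h : weval (comb a b) (wsubst (ren2 0) h) = weval a h.
Proof.
rewrite weval_subst; apply: weval_ext => i /=.
by rewrite gmulg1 /comb addn0 odd_double doubleK.
Qed.

Lemma weval_ren1 (G : group) (a b : nat -> G) h : weval (comb a b) (wsubst (ren2 1) h) = weval b h.
Proof.
rewrite weval_subst; apply: weval_ext => i /=.
by rewrite gmulg1 /comb addn1 /= odd_double /= uphalf_double.
Qed.

Lemma values1 (G : group) H : is_Tsubgroup H -> @values H G (gone G).
Proof. case=> [[_ H0 _ _] _]; by exists [::], (fun _ => gone G). Qed.

Lemma valuesV (G : group) H x : is_Tsubgroup H -> @values H G x -> @values H G (ginv x).
Proof.
case=> [[_ _ _ Hi] _] [h [a [Hh ->]]]; exists (winv h), a; split; first exact: Hi.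
by rewrite weval_winv.
Qed.

Lemma valuesM (G : group) H x y : is_Tsubgroup H -> @values H G x -> @values H G y ->
  @values H G (gmul x y).
Proof.
case=> [[_ _ Hc _] Hs] [h [a [Hh ->]]] [h' [b [Hh' ->]]].
exists (wsubst (ren2 0) h ++ wsubst (ren2 1) h'), (comb a b); split.
  by apply: (Hc); apply: Hs.
by rewrite weval_cat weval_ren0 weval_ren1.
Qed.

Lemma valuesC (G : group) H x y : is_Tsubgroup H -> @values H G x -> @values H G y ->
  @values (comm_sub H) G (gcomm x y).
Proof.
case=> [[_ _ _ _] Hs] [h [a [Hh ->]]] [h' [b [Hh' ->]]].
exists (wcomm (wsubst (ren2 0) h) (wsubst (ren2 1) h')), (comb a b); split.
  by apply: cs_comm; apply: Hs.
by rewrite weval_comm weval_ren0 weval_ren1.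
Qed.

Lemma values_le (G : group) H x : is_Tsubgroup H -> @values (comm_sub H) G x -> @values H G x.
Proof.
move=> HT [h [a [Hh ->]]]; exists h, a; split=> //; exact: comm_sub_le.
Qed.

Lemma weak_comm (G : group) S H : is_Tsubgroup S -> is_Tsubgroup H ->
  weak_ids_modT G H S -> weak_ids_modT G (comm_sub H) (comm_sub S).
Proof.
move=> ST HT [N [N0 W]]; exists N; split=> // s Hs a Ha.
have Ha' : forall k l : 'I_N, k != l -> forall i j,
    @values H G (gcomm (a k i) (a l j)).
  move=> k l kl i j; apply: values_le => //; exact: Ha.
pose P k u := S u /\ ~ @values H G (weval (a k) u).
have H0 : S [::] by case: ST => [[]].
have tdef : forall k, {t : word | S t /\ ((exists u, P k u) -> P k t)}.
  move=> k; apply: constructive_indefinite_description.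
  case: (classic (exists u, P k u)) => [ex|nex].
    case: (ex) => u Pu.
    by exists u; split=> //; case: Pu.
  by exists [::]; split=> // /nex.
pose t k := sval (tdef k).
have St : forall k, S (t k) by move=> k; rewrite /t; case: (tdef k) => u [].
have [k Hk] := W t St a Ha'.
have allS : forall u, S u -> @values H G (weval (a k) u).
  move=> u Su; apply: NNPP => nv.
  have : exists u, P k u by exists u.
  rewrite /t in Hk; case: (tdef k) Hk => v [_ Hv] /= Hk /Hv [_]; exact.
exists k.
have CT := comm_sub_T HT.
elim: (Hs k) => {Hs} [u v Su Sv| |u v _ IHu _ IHv|u _ IH|u v e _ IH].
- rewrite weval_comm; apply: valuesC => //; exact: allS.
- exact: values1.
- rewrite weval_cat; exact: valuesM.
- rewrite weval_winv; exact: valuesV.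
- by rewrite -(weval_freeq (a k) e).
Qed.

From mathcomp Require Import zify.

Lemma ws_comm (G : group) A B : weakstar_ids_mod G A B ->
  weakstar_ids_mod G (comm_sub A) (comm_sub B).
Proof.
case=> m [Ss [e0 em HT HW]].
exists m, (fun j => comm_sub (Ss j)); split.
- by rewrite e0.
- by rewrite em.
- move=> j hj; apply: comm_sub_T; exact: HT.
- move=> j /andP [j0 jm]; apply: weak_comm; first (apply: HT; lia).
  + by apply: HT.
  + by apply: HW; rewrite j0 jm.
Qed.

Lemma ws_iter (G : group) A B n : weakstar_ids_mod G A B ->
  weakstar_ids_mod G (iter n comm_sub A) (iter n comm_sub B).
Proof. elim: n => [//|n IH] h /=; exact: ws_comm (IH h). Qed.

Lemma derived_iter n k : iter n comm_sub (derived k) = derived (n + k).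
Proof. elim: n => [//|n IH] /=; by rewrite IH. Qed.

Lemma ws_cat (G : group) A B C : weakstar_ids_mod G A B ->
  weakstar_ids_mod G B C -> weakstar_ids_mod G A C.
Proof.
case=> m1 [S1 [e10 e1m T1 W1]] [m2 [S2 [e20 e2m T2 W2]]].
exists (m1 + m2), (fun j => if j <= m1 then S1 j else S2 (j - m1)); split.
- by rewrite leq0n.
- case: (leqP (m1 + m2) m1) => h.
    have hm : m2 = 0 by lia. subst m2.
    by rewrite addn0 e1m -e2m e20.
  by rewrite addKn.
- move=> j hj; case: (leqP j m1) => h; [exact: T1 | apply: T2; lia].
- move=> j /andP [j0 jm]; case: (leqP j m1) => h.
    have -> : j.-1 <= m1 by lia.
    by apply: W1; lia.
  case: (leqP j.-1 m1) => h'.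
    have ej : j = m1.+1 by lia.
    rewrite ej /= subSn // subnn e1m -e20.
    by apply: W2; lia.
  have -> : j.-1 - m1 = (j - m1).-1 by lia.
  by apply: W2; lia.
Qed.

Theorem corollary5p8 (G : group) :
  fin_gen G ->
  weakstar_ids_mod G (derived 1) (derived 2) ->
  forall n : nat, 1 <= n -> weakstar_ids_mod G (derived 1) (derived n).
Proof.
move=> _ hyp.
have base : weakstar_ids_mod G (derived 1) (derived 1).
  case: (hyp) => m [Ss [e0 _ HT _]].
  exists 0, (fun _ => derived 1); split=> //.
  - move=> j _; rewrite -e0; exact: HT.
  - by move=> j /andP [j0 jm]; lia.
have step : forall n, weakstar_ids_mod G (derived 1) (derived n.+1).
  elim=> [//|n IH]; apply: ws_cat IH _.
  have := ws_iter n hyp; rewrite !derived_iter.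
  by rewrite addn1 addn2.
by case=> [//|n] _; exact: step.
Qed.
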